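(* Let $n\ge 2$ and $w\in\widetilde{S}_n^\circ$ with gap vector $\dot g(w)=(g_1,\dots,g_{n-1})$. Then the Coxeter length of $w$ is \[\ell(w)=\sum_{i=1}^{n-1}(n-i)\,g_i = g_{n-1}+2g_{n-2}+\cdots+(n-1)g_1 .\]
   Context: An affine permutation of size $n$ is a bijection $w:\mathbb{Z}\to\mathbb{Z}$ with $w(i+n)=w(i)+n$ for all $i$ and $w(1)+\cdots+w(n)=\binom{n+1}{2}$; $[w(1),\dots,w(n)]$ is its base window. The affine symmetric group $\widetilde{S}_n$ is the group of these under composition. It is generated by $s_0,\dots,s_{n-1}$, where $ws_i$ is obtained from $w$ by swapping the values at positions $i+mn$ and $i+1+mn$ for every $m\in\mathbb{Z}$; the Coxeter length $\ell(w)$ is the minimal number of such generators in a factorization of $w$. Let $\widetilde{S}_n^\circ$ be the set of $w\in\widetilde{S}_n$ with $w(1)<w(2)<\cdots<w(n)$ (minimal length coset representatives). For $w\in\widetilde{S}_n^\circ$ with base window $w_1<\cdots<w_n$, call an integer a bead if it equals $w_j-mn$ for some $1\le j\le n$ and some integer $m\ge 0$, and a gap otherwise. The gap vector is $\dot g(w)=(g_1,\dots,g_{n-1})$, where $g_i$ is the number of gaps strictly between $w_i$ and $w_{i+1}$. *)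

(* Defs.v *)
From Stdlib Require Import ZArith List Lia Bool.
Import ListNotations.
Open Scope Z_scope.

Definition is_affine_perm (n : nat) (w : Z -> Z) : Prop :=
  (forall x y, w x = w y -> x = y) /\
  (forall y, exists x, w x = y) /\
  (forall i, w (i + Z.of_nat n) = w i + Z.of_nat n) /\
  fold_right Z.add 0 (map (fun k => w (Z.of_nat k)) (seq 1 n))
    = Z.of_nat n * (Z.of_nat n + 1) / 2.

Definition gen (n : nat) (i : nat) (j : Z) : Z :=
  let N := Z.of_nat n in
  if Z.eqb (j mod N) (Z.of_nat i mod N) then j + 1
  else if Z.eqb (j mod N) ((Z.of_nat i + 1) mod N) then j - 1
  else j.

(* the product s_{i1} s_{i2} ... s_{ik} (composition of functions);
   note w s_i = w o gen n i swaps the values of w at positions i+mn, i+1+mn *)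
Definition gen_prod (n : nat) (l : list nat) : Z -> Z :=
  fold_right (fun i f => fun z => gen n i (f z)) (fun z => z) l.

Definition is_factorization (n : nat) (w : Z -> Z) (l : list nat) : Prop :=
  Forall (fun i => (i < n)%nat) l /\ forall z, w z = gen_prod n l z.

Definition coxeter_length_is (n : nat) (w : Z -> Z) (k : nat) : Prop :=
  (exists l, is_factorization n w l /\ length l = k) /\
  (forall l, is_factorization n w l -> (k <= length l)%nat).

(* minimal length coset representatives: w(1) < ... < w(n) *)
Definition window_increasing (n : nat) (w : Z -> Z) : Prop :=
  forall i : nat, (1 <= i)%nat -> (i < n)%nat -> w (Z.of_nat i) < w (Z.of_nat i + 1).

Definition is_bead (n : nat) (w : Z -> Z) (x : Z) : Prop :=
  exists (j : nat) (m : Z), (1 <= j <= n)%nat /\ 0 <= m /\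
    x = w (Z.of_nat j) - m * Z.of_nat n.

(* boolean version (literal unfolding: m = (w_j - x)/n) *)
Definition is_beadb (n : nat) (w : Z -> Z) (x : Z) : bool :=
  existsb (fun j => Z.leb x (w (Z.of_nat j)) &&
                    Z.eqb ((w (Z.of_nat j) - x) mod Z.of_nat n) 0)
          (seq 1 n).

Lemma is_beadb_spec n w x : (n > 0)%nat -> is_beadb n w x = true <-> is_bead n w x.
Proof.
  intros Hn. unfold is_beadb, is_bead. rewrite existsb_exists. split.
  - intros [j [Hj Hb]]. apply in_seq in Hj.
    apply andb_true_iff in Hb as [H1 H2]. apply Z.leb_le in H1. apply Z.eqb_eq in H2.
    exists j, ((w (Z.of_nat j) - x) / Z.of_nat n). split; [lia|].
    assert (HN : Z.of_nat n > 0) by lia.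
    pose proof (Z.div_mod (w (Z.of_nat j) - x) (Z.of_nat n) ltac:(lia)) as E.
    split. apply Z.div_pos; lia. rewrite H2 in E. lia.
  - intros [j [m [Hj [Hm Hx]]]]. exists j. split. apply in_seq; lia.
    apply andb_true_iff; split. apply Z.leb_le. nia.
    apply Z.eqb_eq. subst x.
    replace (w (Z.of_nat j) - (w (Z.of_nat j) - m * Z.of_nat n)) with (m * Z.of_nat n) by ring.
    apply Z.mod_mul. lia.
Qed.

Definition Zbetween (a b : Z) : list Z :=
  map (fun k => a + 1 + Z.of_nat k) (seq 0 (Z.to_nat (b - a - 1))).

Definition gap (n : nat) (w : Z -> Z) (i : nat) : nat :=
  length (filter (fun x => negb (is_beadb n w x))
    (Zbetween (w (Z.of_nat i)) (w (Z.of_nat i + 1)))).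

Definition weighted_gap_sum (n : nat) (w : Z -> Z) : nat :=
  fold_right Nat.add 0%nat (map (fun i => ((n - i) * gap n w i)%nat) (seq 1 (n - 1))).

(* Main.v *)
Require Import Defs.
From Stdlib Require Import ZArith List Lia Bool Classical.
Import ListNotations.
Open Scope Z_scope.

Lemma eqm_ex (N a b : Z) : 0 < N -> (a mod N = b mod N <-> exists m, a = b + m * N).
Proof.
  intros HN; split.
  - intros H. exists (a / N - b / N).
    pose proof (Z.div_mod a N ltac:(lia)). pose proof (Z.div_mod b N ltac:(lia)). nia.
  - intros [m ->]. now rewrite Z_mod_plus_full.
Qed.

Lemma eqm_dec_ex (N a b : Z) : 0 < N -> (a mod N =? b mod N) = true <-> exists m, a = b + m * N.
Proof. intros. rewrite Z.eqb_eq. now apply eqm_ex. Qed.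

Lemma eqm_dec_ex_f (N a b : Z) : 0 < N -> (a mod N =? b mod N) = false <-> ~ exists m, a = b + m * N.
Proof. intros. rewrite <- eqm_dec_ex by lia. destruct (_ =? _); intuition discriminate. Qed.

Lemma three_cases m : -1 <= m -> m < 2 -> m = -1 \/ m = 0 \/ m = 1. Proof. lia. Qed.
Ltac msplit m := let H1 := fresh in let H2 := fresh in let H3 := fresh in
  destruct (Z_lt_le_dec m (-1)) as [H1|H1]; [|destruct (Z_lt_le_dec m 2) as [H2|H2]];
  [ | destruct (three_cases m H1 H2) as [H3|[H3|H3]]; subst m | ].
Ltac mkill := repeat match goal with H : exists m : Z, _ |- _ => destruct H end;
  repeat match goal with H : _ = _ + ?m * _ |- _ => is_var m; revert H end;
  repeat match goal with |- _ = _ + ?m * _ -> _ => intro; msplit m; try nia end.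
Ltac wit := first [exists 0; lia | exists 1; lia | exists (-1); lia |
   match goal with m : Z |- _ => first [exists m; lia | exists (m+1); lia | exists (m-1); lia] end].
Ltac diffk := repeat match goal with
  | H : ?a + ?m * ?N = ?b + ?m' * ?N |- _ => is_var m; is_var m';
      assert (a - b = (m' - m) * N) by lia; clear H
  | H : ?a + ?m * ?N = ?b + ?m' * ?N |- _ => is_var m; is_var m';
      assert (a - b = (m' - m) * N) by lia; clear H
  end.
Ltac msplit2 := repeat match goal with
  | H : ?c = (?m' - ?m) * ?N |- _ => let k := fresh "k" in remember (m' - m) as k; clear dependent m'; revert H
  end;
  repeat match goal with |- _ = ?k * _ -> _ => intro; msplit k; try nia end.
Ltac zsolve := first [ solve [exfalso; repeat match goal with H : exists m : Z, _ |- _ => destruct H end; diffk; msplit2] | lia | solve [exfalso; mkill] |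
   solve [exfalso; repeat match goal with H : exists m : Z, _ |- _ => destruct H end; match goal with H : ~ _ |- _ => apply H; wit end] ].

Definition APp (n : nat) (w : Z -> Z) : Prop :=
  (forall x y, w x = w y -> x = y) /\ (forall z, w (z + Z.of_nat n) = w z + Z.of_nat n).

Lemma per_nat n w : (forall z, w (z + Z.of_nat n) = w z + Z.of_nat n) ->
  forall k : nat, forall z, w (z + Z.of_nat k * Z.of_nat n) = w z + Z.of_nat k * Z.of_nat n.
Proof.
  intros H k; induction k; intros z. simpl. now rewrite !Z.add_0_r.
  replace (z + Z.of_nat (S k) * Z.of_nat n) with ((z + Z.of_nat k * Z.of_nat n) + Z.of_nat n) by lia.
  rewrite H, IHk. lia.
Qed.

Lemma per_m n w : (forall z, w (z + Z.of_nat n) = w z + Z.of_nat n) ->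
  forall m z, w (z + m * Z.of_nat n) = w z + m * Z.of_nat n.
Proof.
  intros H m z. destruct (Z_le_gt_dec 0 m).
  - replace m with (Z.of_nat (Z.to_nat m)) by lia. now apply per_nat.
  - pose proof (per_nat n w H (Z.to_nat (-m)) (z + m * Z.of_nat n)).
    replace (z + m * Z.of_nat n + Z.of_nat (Z.to_nat (- m)) * Z.of_nat n) with z in H0 by lia. lia.
Qed.

Lemma ap_res n w : (n > 0)%nat -> APp n w -> forall a b m, w a = w b + m * Z.of_nat n -> a = b + m * Z.of_nat n.
Proof.
  intros Hn [Hi Hp] a b m E. apply Hi. rewrite per_m; auto.
Qed.

Section Gen.
Variable n : nat.
Hypothesis Hn : (2 <= n)%nat.
Let N := Z.of_nat n.
Let HN : 2 <= N. Proof. unfold N; lia. Qed.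

Lemma gen_per i z : gen n i (z + N) = gen n i z + N.
Proof.
  unfold gen. fold N. replace (z + N) with (z + 1 * N) by lia. rewrite Z_mod_plus_full.
  destruct (_ =? _); [lia|]. destruct (_ =? _); lia.
Qed.

Ltac gsimpl := unfold gen; fold N; pose proof HN;
  repeat match goal with
  | |- context [ (?a mod N =? ?b mod N) ] =>
      let E := fresh "E" in destruct (a mod N =? b mod N) eqn:E;
      [apply eqm_dec_ex in E; [|lia] | apply eqm_dec_ex_f in E; [|lia]]
  end.

Lemma gen_inv i z : (i < n)%nat -> gen n i (gen n i z) = z.
Proof.
  intros Hi. unfold gen at 2. fold N.
  destruct (z mod N =? Z.of_nat i mod N) eqn:E1.
  - apply eqm_dec_ex in E1; [|lia]. destruct E1 as [m ->].
    replace (Z.of_nat i + m * N + 1) with (Z.of_nat i + 1 + m * N) by lia.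
    gsimpl; zsolve.
  - apply eqm_dec_ex_f in E1; [|lia].
    destruct (z mod N =? (Z.of_nat i + 1) mod N) eqn:E2.
    + apply eqm_dec_ex in E2; [|lia]. destruct E2 as [m ->].
      replace (Z.of_nat i + 1 + m * N - 1) with (Z.of_nat i + m * N) by lia.
      gsimpl; zsolve.
    + gsimpl; zsolve.
Qed.

Lemma gen_inj i x y : (i < n)%nat -> gen n i x = gen n i y -> x = y.
Proof. intros Hi E. rewrite <- (gen_inv i x Hi), <- (gen_inv i y Hi). now rewrite E. Qed.

Definition tauN (p j : nat) : nat := if Nat.eqb j p then S p else if Nat.eqb j (S p) then p else j.

Lemma gen_win1 i j : (1 <= i)%nat -> (i < n)%nat -> (j < n)%nat ->
  gen n i (1 + Z.of_nat j) = 1 + Z.of_nat (tauN (i - 1) j).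
Proof.
  intros H1 H2 H3. unfold tauN.
  destruct (Nat.eqb_spec j (i - 1)); [|destruct (Nat.eqb_spec j (S (i - 1)))];
  gsimpl; zsolve.
Qed.

Lemma gen_win0 j : (j < n)%nat -> gen n 0 (Z.of_nat j) = Z.of_nat (tauN 0 j).
Proof.
  intros H3. unfold tauN.
  destruct (Nat.eqb_spec j 0); [|destruct (Nat.eqb_spec j 1)];
  gsimpl; zsolve.
Qed.

End Gen.

Definition sumZ (l : list Z) := fold_right Z.add 0 l.
Lemma sumZ_app l1 l2 : sumZ (l1 ++ l2) = sumZ l1 + sumZ l2.
Proof. induction l1; simpl; [lia|]. unfold sumZ in *. simpl. rewrite IHl1. lia. Qed.

Lemma sumZ_ext (f g : nat -> Z) s m : (forall k, (s <= k < s + m)%nat -> f k = g k) ->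
  sumZ (map f (seq s m)) = sumZ (map g (seq s m)).
Proof.
  intros H. f_equal. apply map_ext_in. intros a Ha. apply in_seq in Ha. apply H. lia.
Qed.

Lemma tauN_other p j : j <> p -> j <> S p -> tauN p j = j.
Proof. intros. unfold tauN. destruct (Nat.eqb_spec j p); [lia|]. destruct (Nat.eqb_spec j (S p)); lia. Qed.

Lemma tauN_p p : tauN p p = S p.
Proof. unfold tauN. now rewrite Nat.eqb_refl. Qed.
Lemma tauN_p1 p : tauN p (S p) = p.
Proof. unfold tauN. destruct (Nat.eqb_spec (S p) p); [lia|]. now rewrite Nat.eqb_refl. Qed.

Lemma seq_split3 a b c : seq 1 (a + b + c) = seq 1 a ++ seq (1 + a) b ++ seq (1 + a + b) c.
Proof. rewrite !seq_app. rewrite app_assoc. f_equal. Qed.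

Lemma sum_swap n w i : (2 <= n)%nat -> (i < n)%nat ->
  (forall z, w (z + Z.of_nat n) = w z + Z.of_nat n) ->
  sumZ (map (fun k => w (gen n i (Z.of_nat k))) (seq 1 n)) =
  sumZ (map (fun k => w (Z.of_nat k)) (seq 1 n)).
Proof.
  intros Hn Hi Hper.
  destruct i as [|i].
  - assert (Hs : seq 1 n = seq 1 1 ++ seq 2 (n - 2) ++ seq n 1).
    { replace n with (1 + (n - 2) + 1)%nat at 1 by lia. rewrite seq_split3. do 3 f_equal; lia. }
    rewrite Hs, !map_app, !sumZ_app. simpl.
    assert (E1 : gen n 0 1 = 0). { pose proof (gen_win0 n Hn 1 ltac:(lia)). simpl in H. exact H. }
    assert (E2 : gen n 0 (Z.of_nat n) = 1 + Z.of_nat n).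
    { replace (Z.of_nat n) with (0 + Z.of_nat n) at 1 by lia.
      rewrite gen_per by lia. pose proof (gen_win0 n Hn 0 ltac:(lia)). simpl in H. rewrite H. lia. }
    rewrite E1, E2.
    rewrite (sumZ_ext (fun k => w (gen n 0 (Z.of_nat k))) (fun k => w (Z.of_nat k))).
    2:{ intros k Hk. rewrite gen_win0 by lia. rewrite tauN_other by lia. auto. }
    replace (1 + Z.of_nat n) with (1 + Z.of_nat n) by lia.
    pose proof (Hper 0) as H0. pose proof (Hper 1) as H1. simpl in H0.
    replace (1 + Z.of_nat n) with (1 + Z.of_nat n) in H1 by lia. lia.
  - assert (Hs : seq 1 n = seq 1 i ++ [S i; S (S i)] ++ seq (1 + i + 2) (n - i - 2)).
    { replace n with (i + 2 + (n - i - 2))%nat at 1 by lia. rewrite seq_split3. auto. }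
    rewrite Hs, !map_app, !sumZ_app.
    rewrite (sumZ_ext (fun k => w (gen n (S i) (Z.of_nat k))) (fun k => w (Z.of_nat k)) 1).
    2:{ intros k Hk. replace (Z.of_nat k) with (1 + Z.of_nat (k - 1)) by lia.
        rewrite gen_win1 by lia. rewrite tauN_other by lia. f_equal; lia. }
    rewrite (sumZ_ext (fun k => w (gen n (S i) (Z.of_nat k))) (fun k => w (Z.of_nat k)) (1 + i + 2)).
    2:{ intros k Hk. replace (Z.of_nat k) with (1 + Z.of_nat (k - 1)) by lia.
        rewrite gen_win1 by lia. rewrite tauN_other by lia. f_equal; lia. }
    unfold sumZ at 2 5. cbn [map fold_right].
    replace (Z.of_nat (S i)) with (1 + Z.of_nat i) by lia.
    replace (Z.of_nat (S (S i))) with (1 + Z.of_nat (S i)) by lia.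
    rewrite !gen_win1 by lia.
    replace (S i - 1)%nat with i by lia. rewrite tauN_p, tauN_p1.
    lia.
Qed.

Lemma sum_lin c s m : 2 * sumZ (map (fun k => c + Z.of_nat k) (seq s m)) =
  2 * Z.of_nat m * c + Z.of_nat m * (2 * Z.of_nat s + Z.of_nat m - 1).
Proof.
  revert s; induction m; intros s; [simpl; lia|].
  cbn [seq map]. unfold sumZ in *. cbn [fold_right]. rewrite Z.mul_add_distr_l, IHm. lia.
Qed.

Lemma no_descent_id n w : (2 <= n)%nat -> is_affine_perm n w ->
  (forall i, (i < n)%nat -> w (Z.of_nat i) < w (Z.of_nat i + 1)) -> forall z, w z = z.
Proof.
  intros Hn [Hinj [Hsurj [Hper Hsum]]] Hd.
  assert (Hinc : forall j k, (k + j <= n)%nat -> w (Z.of_nat (k + j)) >= w (Z.of_nat k) + Z.of_nat j).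
  { induction j; intros k Hk. rewrite Nat.add_0_r. lia.
    specialize (IHj k ltac:(lia)). specialize (Hd (k + j)%nat ltac:(lia)).
    replace (Z.of_nat (k + S j)) with (Z.of_nat (k + j) + 1) by lia. lia. }
  set (c := w 0).
  assert (Hwn : w (Z.of_nat n) = c + Z.of_nat n). { pose proof (Hper 0). simpl in H. exact H. }
  assert (Hk : forall k, (k <= n)%nat -> w (Z.of_nat k) = c + Z.of_nat k).
  { intros k Hk. pose proof (Hinc k 0%nat ltac:(lia)). pose proof (Hinc (n - k)%nat k ltac:(lia)).
    replace (k + (n - k))%nat with n in H0 by lia. simpl in H. unfold c. lia. }
  assert (Hs : fold_right Z.add 0 (map (fun k => w (Z.of_nat k)) (seq 1 n)) =
               sumZ (map (fun k => c + Z.of_nat k) (seq 1 n))).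
  { apply (sumZ_ext (fun k => w (Z.of_nat k)) (fun k => c + Z.of_nat k)). intros k Hk'. apply Hk. lia. }
  pose proof (sum_lin c 1 n). rewrite <- Hs, Hsum in H.
  set (T := Z.of_nat n * (Z.of_nat n + 1)) in *.
  pose proof (Z.div_mod T 2 ltac:(lia)). pose proof (Z.mod_pos_bound T 2 ltac:(lia)).
  assert (Hc : c = 0).
  { assert (Z.of_nat n * c = 0).
    { assert (T mod 2 = - 2 * (Z.of_nat n * c)) by (unfold T in *; nia). nia. }
    nia. }
  intros z. pose proof (Z.div_mod z (Z.of_nat n) ltac:(lia)).
  pose proof (Z.mod_pos_bound z (Z.of_nat n) ltac:(lia)).
  rewrite H2. replace (Z.of_nat n * (z / Z.of_nat n) + z mod Z.of_nat n) with
    (z mod Z.of_nat n + (z / Z.of_nat n) * Z.of_nat n) by lia.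
  rewrite (per_m n w Hper).
  replace (z mod Z.of_nat n) with (Z.of_nat (Z.to_nat (z mod Z.of_nat n))) by lia.
  rewrite Hk by lia. lia.
Qed.

Definition cnt (N a : Z) (l : list Z) : nat := length (filter (fun x => (a - x) mod N =? 0) l).

Lemma cnt_app N a l1 l2 : cnt N a (l1 ++ l2) = (cnt N a l1 + cnt N a l2)%nat.
Proof. unfold cnt. now rewrite filter_app, length_app. Qed.

Lemma map_seq_shift a s m : map (fun t => a + 1 + Z.of_nat t) (seq s m) =
  map (fun t => (a + Z.of_nat s) + 1 + Z.of_nat t) (seq 0 m).
Proof.
  revert s; induction m; intros s; [reflexivity|].
  cbn [seq map]. f_equal; [lia|]. rewrite IHm, <- seq_shift, map_map.
  apply map_ext. intros t. lia.
Qed.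

Lemma Zbetween_split a b c : a < b < c -> Zbetween a c = Zbetween a b ++ b :: Zbetween b c.
Proof.
  intros H. unfold Zbetween.
  replace (Z.to_nat (c - a - 1)) with (Z.to_nat (b - a - 1) + S (Z.to_nat (c - b - 1)))%nat by lia.
  rewrite seq_app, map_app. f_equal. cbn [seq map].
  rewrite Nat.add_0_l. f_equal; [lia|].
  rewrite map_seq_shift. apply map_ext. intros t. lia.
Qed.

Lemma In_Zbetween x a b : In x (Zbetween a b) -> a < x < b.
Proof.
  unfold Zbetween. intros H. apply in_map_iff in H. destruct H as [t [<- Ht]].
  apply in_seq in Ht. lia.
Qed.

Lemma div_succ N M : 0 < N -> 0 <= M ->
  (M + 1) / N = M / N + (if (M + 1) mod N =? 0 then 1 else 0).
Proof.
  intros HN HM. pose proof (Z.div_mod M N ltac:(lia)). pose proof (Z.mod_pos_bound M N HN).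
  destruct (Z.eq_dec (M mod N) (N - 1)).
  - assert (E : (M + 1) / N = M / N + 1).
    { symmetry; apply Z.div_unique with 0; lia. }
    assert (E2 : (M + 1) mod N = 0).
    { symmetry; apply Z.mod_unique with (M / N + 1); lia. }
    rewrite E, E2. reflexivity.
  - assert (E : (M + 1) / N = M / N).
    { symmetry; apply Z.div_unique with (M mod N + 1); lia. }
    assert (E2 : (M + 1) mod N = M mod N + 1).
    { symmetry; apply Z.mod_unique with (M / N); lia. }
    rewrite E, E2. destruct (Z.eqb_spec (M mod N + 1) 0); lia.
Qed.

Lemma cnt_Zbetween N a b : 0 < N -> a < b -> cnt N a (Zbetween a b) = Z.to_nat ((b - a - 1) / N).
Proof.
  intros HN Hab. unfold Zbetween.
  replace (b - a - 1) with (Z.of_nat (Z.to_nat (b - a - 1))) at 2 by lia.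
  generalize (Z.to_nat (b - a - 1)) as M. induction M.
  - simpl. reflexivity.
  - rewrite seq_S, map_app, cnt_app, IHM. cbn [map]. unfold cnt at 1. cbn [filter].
    replace (a - (a + 1 + Z.of_nat (0 + M))) with (- (Z.of_nat M + 1)) by lia.
    replace (Z.of_nat (S M)) with (Z.of_nat M + 1) by lia.
    rewrite div_succ by lia.
    assert (Hm : (- (Z.of_nat M + 1)) mod N = 0 <-> (Z.of_nat M + 1) mod N = 0).
    { split; intros H.
      - apply Z_mod_zero_opp_full in H. now rewrite Z.opp_involutive in H.
      - now apply Z_mod_zero_opp_full. }
    pose proof (Z.div_pos (Z.of_nat M) N ltac:(lia) HN).
    destruct (Z.eqb_spec ((Z.of_nat M + 1) mod N) 0);
    destruct (Z.eqb_spec ((- (Z.of_nat M + 1)) mod N) 0); cbn [length]; try tauto; lia.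
Qed.

From mathcomp Require Import all_boot zify.
From mathcomp Require Import fingroup perm.
Set Warnings "-notation-overridden".
Open Scope Z_scope.

Definition Tf (n : nat) (D E : Z) : nat := Z.to_nat ((D - 1) / Z.of_nat n - E / Z.of_nat n).
Definition Nf (n : nat) (w : Z -> Z) (j k : Z) : nat := Tf n (w j - w k) (j - k).
Definition Lw (n : nat) (w : Z -> Z) (a : Z) : nat :=
  \sum_(0 <= j < n) \sum_(0 <= k < n) Nf n w (a + Z.of_nat j)%Z (a + Z.of_nat k)%Z.

Lemma Lw_ext n w v a : (forall z, w z = v z) -> Lw n w a = Lw n v a.
Proof.
  move=> H. rewrite /Lw. apply: eq_bigr => j _. apply: eq_bigr => k _. by rewrite /Nf !H.
Qed.

Lemma sum_shift n (H : Z -> nat) a : (1 <= n)%N -> H (a + Z.of_nat n) = H a ->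
  \sum_(0 <= j < n) H (a + Z.of_nat j)%Z = \sum_(0 <= j < n) H (a + 1 + Z.of_nat j)%Z.
Proof.
  move=> Hn Hp. case: n Hn Hp => [//|m] _ Hp.
  rewrite big_ltn // big_add1 /= big_nat_recr //=.
  rewrite Z.add_0_r -Hp addnC. congr (_ + _)%N.
  - apply: eq_bigr => j _. f_equal. lia.
  - f_equal. lia.
Qed.

Lemma Nf_per1 n w j k : (0 < n)%N -> (forall z, w (z + Z.of_nat n) = w z + Z.of_nat n) ->
  Nf n w (j + Z.of_nat n) k = Nf n w j k.
Proof.
  move=> Hn Hp. rewrite /Nf /Tf Hp.
  replace (w j + Z.of_nat n - w k - 1) with ((w j - w k - 1) + 1 * Z.of_nat n) by lia.
  replace (j + Z.of_nat n - k) with ((j - k) + 1 * Z.of_nat n) by lia.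
  rewrite !Z.div_add; try lia; f_equal; lia.
Qed.

Lemma Nf_per2 n w j k : (0 < n)%N -> (forall z, w (z + Z.of_nat n) = w z + Z.of_nat n) ->
  Nf n w j (k + Z.of_nat n) = Nf n w j k.
Proof.
  move=> Hn Hp. rewrite /Nf /Tf Hp.
  replace (w j - (w k + Z.of_nat n) - 1) with ((w j - w k - 1) + (-1) * Z.of_nat n) by lia.
  replace (j - (k + Z.of_nat n)) with ((j - k) + (-1) * Z.of_nat n) by lia.
  rewrite !Z.div_add; try lia; f_equal; lia.
Qed.

Lemma Lw_shift n w a : (0 < n)%N -> (forall z, w (z + Z.of_nat n) = w z + Z.of_nat n) ->
  Lw n w a = Lw n w (a + 1).
Proof.
  move=> Hn Hp. rewrite /Lw.
  rewrite (sum_shift n (fun x => \sum_(0 <= k < n) Nf n w x (a + Z.of_nat k)%Z)) //; last first.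
    apply: eq_bigr => k _. exact: Nf_per1.
  apply: eq_bigr => j _.
  rewrite (sum_shift n (fun x => Nf n w (a + 1 + Z.of_nat j)%Z x)) //.
  exact: Nf_per2.
Qed.

Lemma sum_two (T : finType) (H : T -> nat) p1 p2 : p1 != p2 ->
  (\sum_p H p = H p1 + H p2 + \sum_(p | (p != p1) && (p != p2)) H p)%N.
Proof.
  move=> Hne. rewrite (bigD1 p1) //= (bigD1 p2) /=; try by rewrite eq_sym Hne.
  by rewrite addnA.
Qed.

Lemma pair_swap_sum (m : nat) (F G : 'I_m -> 'I_m -> nat) (p1 p2 : 'I_m * 'I_m) :
  p1 != p2 -> (forall i j, (i, j) != p1 -> (i, j) != p2 -> F i j = G i j) ->
  (\sum_i \sum_j F i j + G p1.1 p1.2 + G p2.1 p2.2 =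
   \sum_i \sum_j G i j + F p1.1 p1.2 + F p2.1 p2.2)%N.
Proof.
  move=> Hne H. rewrite !pair_big /=.
  rewrite (sum_two _ (fun p => F p.1 p.2) p1 p2) // (sum_two _ (fun p => G p.1 p.2) p1 p2) //.
  have -> : \sum_(i | (i != p1) && (i != p2)) F i.1 i.2 = \sum_(i | (i != p1) && (i != p2)) G i.1 i.2.
    apply: eq_bigr => [[i j]] /andP [H1 H2]. exact: H.
  move: (\sum_(i | _) _)%N (F p1.1 p1.2) (F p2.1 p2.2) (G p1.1 p1.2) (G p2.1 p2.2) => S a b c d. lia.
Qed.

Lemma div_nm (N D : Z) : 0 < N -> D mod N <> 0 -> (D - 1) / N = D / N /\ (- D - 1) / N = - (D / N) - 1.
Proof.
  move=> HN Hm. pose proof (Z.div_mod D N ltac:(lia)). pose proof (Z.mod_pos_bound D N HN).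
  split.
  - symmetry; apply Z.div_unique with (D mod N - 1); lia.
  - symmetry; apply Z.div_unique with (N - D mod N - 1); nia.
Qed.

Lemma small_div n j k : (j < n)%N -> (k < n)%N ->
  (Z.of_nat j - Z.of_nat k) / Z.of_nat n = if (j < k)%N then -1 else 0.
Proof.
  move=> Hj Hk. case: ifP => H.
  - symmetry; apply Z.div_unique with (Z.of_nat n + Z.of_nat j - Z.of_nat k); lia.
  - symmetry; apply Z.div_unique with (Z.of_nat j - Z.of_nat k); lia.
Qed.

Lemma tau_lt n p j : (p.+1 < n)%N -> (j < n)%N -> (tauN p j < n)%N.
Proof. move=> H1 H2. rewrite /tauN. case: (Nat.eqb_spec j p); case: (Nat.eqb_spec j p.+1); lia. Qed.

Lemma tau_order p j k : ~ (j = p /\ k = p.+1) -> ~ (j = p.+1 /\ k = p) ->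
  (tauN p j < tauN p k)%N = (j < k)%N.
Proof.
  move=> H1 H2. rewrite /tauN.
  case: (Nat.eqb_spec j p); case: (Nat.eqb_spec j p.+1); case: (Nat.eqb_spec k p); case: (Nat.eqb_spec k p.+1);
  move=> *; apply/idP/idP; lia.
Qed.


Lemma not_mult_1 (N k : Z) : 2 <= N -> 1 = k * N -> False.
Proof. move=> H1 H2. destruct (Z_lt_le_dec k 1); nia. Qed.

Lemma Lw_swap n w w' a p : (2 <= n)%N -> APp n w -> (p.+1 < n)%N ->
  (forall j, (j < n)%N -> w' (a + Z.of_nat j) = w (a + Z.of_nat (tauN p j))) ->
  if w (a + Z.of_nat p) <? w (a + Z.of_nat p + 1) then Lw n w' a = (Lw n w a).+1
  else (Lw n w' a).+1 = Lw n w a.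
Proof.
  move=> Hn HAP Hp Hw'. have HAP' := HAP. case: HAP' => [Hinj Hper].
  have e1 : Lw n w' a = \sum_(j < n) \sum_(k < n)
      Tf n (w (a + Z.of_nat (tauN p j)) - w (a + Z.of_nat (tauN p k)))%Z (Z.of_nat j - Z.of_nat k)%Z.
    rewrite /Lw big_mkord. apply: eq_bigr => j _. rewrite big_mkord. apply: eq_bigr => k _.
    rewrite /Nf !Hw' //. f_equal. lia.
  pose P := Ordinal (ltnW Hp). pose P' := Ordinal Hp.
  have Htau : forall j : 'I_n, nat_of_ord (tperm P P' j) = tauN p j.
    move=> j. case: tpermP => [->|->|H1 H2] /=; first by rewrite tauN_p.
      by rewrite tauN_p1.
    rewrite /tauN. case: (Nat.eqb_spec j p) => [E|_].
      exfalso; apply: H1; apply: val_inj; exact E.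
    case: (Nat.eqb_spec j p.+1) => [E|_] //.
    exfalso; apply: H2; apply: val_inj; exact E.
  have e2 : Lw n w a = \sum_(j < n) \sum_(k < n)
      Tf n (w (a + Z.of_nat (tauN p j)) - w (a + Z.of_nat (tauN p k)))%Z
           (Z.of_nat (tauN p j) - Z.of_nat (tauN p k))%Z.
    rewrite /Lw big_mkord (reindex_inj (@perm_inj _ (tperm P P'))). apply: eq_bigr => j _.
    rewrite big_mkord (reindex_inj (@perm_inj _ (tperm P P'))). apply: eq_bigr => k _.
    rewrite /Nf !Htau. f_equal. lia.
  have key := pair_swap_sum n
    (fun j k : 'I_n => Tf n (w (a + Z.of_nat (tauN p j)) - w (a + Z.of_nat (tauN p k)))
           (Z.of_nat (tauN p j) - Z.of_nat (tauN p k)))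
    (fun j k : 'I_n => Tf n (w (a + Z.of_nat (tauN p j)) - w (a + Z.of_nat (tauN p k)))
           (Z.of_nat j - Z.of_nat k)) (P, P') (P', P).
  rewrite -e1 -e2 in key.
  have Hne : (P, P') != (P', P).
    apply/eqP => -[] E. lia.
  have {key} key := key Hne.
  have Hfg : forall i j : 'I_n, (i, j) != (P, P') -> (i, j) != (P', P) ->
     Tf n (w (a + Z.of_nat (tauN p i)) - w (a + Z.of_nat (tauN p j)))
           (Z.of_nat (tauN p i) - Z.of_nat (tauN p j)) =
     Tf n (w (a + Z.of_nat (tauN p i)) - w (a + Z.of_nat (tauN p j)))
           (Z.of_nat i - Z.of_nat j).
    move=> i j H1 H2. rewrite /Tf. rewrite !small_div //; try exact: tau_lt.
    rewrite tau_order //.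
    - move=> [E1 E2]. move/eqP: H1. apply. congr (_, _); apply: val_inj => //.
    - move=> [E1 E2]. move/eqP: H2. apply. congr (_, _); apply: val_inj => //.
  have {key} key := key Hfg.
  cbv beta iota zeta delta [fst snd nat_of_ord P P'] in key.
  rewrite tauN_p tauN_p1 in key.
  set D := w (a + Z.of_nat p + 1) - w (a + Z.of_nat p).
  have HN : 2 <= Z.of_nat n by lia.
  have HD : D mod Z.of_nat n <> 0.
    move=> E. pose proof (Z.div_mod D (Z.of_nat n) ltac:(lia)) as Hdm.
    have E0 : w (a + Z.of_nat p + 1) = w (a + Z.of_nat p) + D / Z.of_nat n * Z.of_nat n.
      rewrite E in Hdm. rewrite /D in Hdm *. lia.
    have E2 := ap_res n w ltac:(lia) HAP _ _ _ E0. apply: (not_mult_1 (Z.of_nat n) (D / Z.of_nat n)) => //. lia.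
  have [Hq1 Hq2] := div_nm (Z.of_nat n) D ltac:(lia) HD.
  have E1 : w (a + Z.of_nat p.+1) - w (a + Z.of_nat p) = D by rewrite /D; f_equal; f_equal; lia.
  have E2 : w (a + Z.of_nat p) - w (a + Z.of_nat p.+1) = - D by rewrite -E1; lia.
  rewrite E1 E2 /Tf in key.
  have E3 : (Z.of_nat p.+1 - Z.of_nat p) = 1 by lia.
  have E4 : (Z.of_nat p - Z.of_nat p.+1) = -1 by lia.
  rewrite E3 E4 Hq1 Hq2 in key.
  rewrite (Z.div_small 1) in key; last lia.
  have E5 : -1 / Z.of_nat n = -1.
    symmetry; apply Z.div_unique with (Z.of_nat n - 1); lia.
  rewrite E5 in key.
  case: Z.ltb_spec => Hlt.
  - have Hq : 0 <= D / Z.of_nat n by apply Z.div_pos; lia.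
    lia.
  - have Hq : D / Z.of_nat n < 0.
      have : D < 0. { have : D <> 0 by move=> E0; apply: HD; rewrite E0. lia. }
      move=> HD0. apply Z.div_lt_upper_bound; lia.
    lia.
Qed.

Definition L (n : nat) (w : Z -> Z) : nat := Lw n w 1.

Lemma APp_right n w i : (2 <= n)%N -> (i < n)%N -> APp n w -> APp n (fun z => w (gen n i z)).
Proof.
  move=> Hn Hi [Hinj Hper]. split.
  - move=> x y /Hinj E. exact: (gen_inj n ltac:(lia) i x y ltac:(lia) E).
  - move=> z. rewrite gen_per ?Hper //; lia.
Qed.

Lemma APp_left n f i : (2 <= n)%N -> (i < n)%N -> APp n f -> APp n (fun z => gen n i (f z)).
Proof.
  move=> Hn Hi [Hinj Hper]. split.
  - move=> x y E. apply: Hinj. exact: (gen_inj n ltac:(lia) i _ _ ltac:(lia) E).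
  - move=> z. rewrite Hper gen_per //; lia.
Qed.

Lemma L_gen n w i : (2 <= n)%N -> (i < n)%N -> APp n w ->
  if w (Z.of_nat i) <? w (Z.of_nat i + 1) then L n (fun z => w (gen n i z)) = (L n w).+1
  else (L n (fun z => w (gen n i z))).+1 = L n w.
Proof.
  move=> Hn Hi HAP. have HAP' := APp_right n w i Hn Hi HAP.
  case: i Hi HAP' => [|i] Hi HAP'.
  - have h1 : Lw n w 0 = L n w := Lw_shift n w 0 ltac:(lia) (proj2 HAP).
    have h2 : Lw n (fun z => w (gen n 0 z)) 0 = L n (fun z => w (gen n 0 z)) :=
      Lw_shift n _ 0 ltac:(lia) (proj2 HAP').
    rewrite -h1 -h2.
    have := Lw_swap n w (fun z => w (gen n 0 z)) 0 0 Hn HAP ltac:(lia).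
    have -> : (0 + Z.of_nat 0) = 0 by [].
    rewrite /=. apply.
    move=> j Hj /=. rewrite gen_win0 //; lia.
  - rewrite /L.
    have := Lw_swap n w (fun z => w (gen n i.+1 z)) 1 i Hn HAP ltac:(lia).
    have -> : 1 + Z.of_nat i = Z.of_nat i.+1 by lia.
    apply. move=> j Hj. rewrite gen_win1; try lia.
    by have -> : (i.+1 - 1)%coq_nat = i by lia.
Qed.

Lemma gen_prod_app n l i z : gen_prod n (l ++ [:: i]) z = gen_prod n l (gen n i z).
Proof. elim: l z => [//|a l IH] z /=. by rewrite IH. Qed.

Lemma APp_gen_prod n l : (2 <= n)%N -> Forall (fun i => (i < n)%coq_nat) l -> APp n (gen_prod n l).
Proof.
  move=> Hn. elim: l => [|a l IH] HF /=.
  - split => //.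
  - inversion HF; subst. apply: APp_left => //. apply/ltP; lia. exact: IH.
Qed.

Lemma L_id n : (0 < n)%N -> L n (fun z => z) = 0%N.
Proof.
  move=> Hn. rewrite /L /Lw. apply: big1 => j _. apply: big1 => k _.
  rewrite /Nf /Tf. set x := (1 + Z.of_nat j - (1 + Z.of_nat k)).
  have : (x - 1) / Z.of_nat n <= x / Z.of_nat n by apply Z.div_le_mono; lia.
  lia.
Qed.

Lemma lower_bound n l : (2 <= n)%N -> Forall (fun i => (i < n)%coq_nat) l ->
  (L n (gen_prod n l) <= length l)%N.
Proof.
  move=> Hn. elim/rev_ind: l => [|i l IH] HF.
  - have -> : L n (gen_prod n [::]) = 0%N by apply: L_id; lia.
    by [].
  - apply Forall_app in HF. case: HF => HF1 HF2. inversion HF2; subst.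
    have Hi : (i < n)%N by apply/ltP.
    have -> : L n (gen_prod n (l ++ [:: i])) = L n (fun z => gen_prod n l (gen n i z)).
      rewrite /L; apply: Lw_ext => z. exact: gen_prod_app.
    have := L_gen n (gen_prod n l) i Hn Hi (APp_gen_prod n l Hn HF1).
    rewrite app_length /=. have := IH HF1.
    case: (_ <? _) => /=; lia.
Qed.

Lemma iap_app n w : is_affine_perm n w -> APp n w.
Proof. move=> [H1 [_ [H3 _]]]. by split. Qed.

Lemma iap_right n w i : (2 <= n)%N -> (i < n)%N -> is_affine_perm n w ->
  is_affine_perm n (fun z => w (gen n i z)).
Proof.
  move=> Hn Hi HI. have [Hinj Hper] := APp_right n w i Hn Hi (iap_app n w HI).
  case: HI => [_ [Hs [Hp Hsum]]].
  split => //. split.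
  - move=> y. case: (Hs y) => x Hx. exists (gen n i x). rewrite gen_inv //; lia.
  - split => //. rewrite -Hsum. apply: sum_swap => //; lia.
Qed.

Lemma upper n : (2 <= n)%N -> forall k w, is_affine_perm n w -> L n w = k ->
  exists l, is_factorization n w l /\ length l = k.
Proof.
  move=> Hn. elim=> [|k IH] w HI HL.
  - case: (classic (exists i, (i < n)%N /\ w (Z.of_nat i + 1) < w (Z.of_nat i))) => [[i [Hi Hd]]|Hnd].
    + have := L_gen n w i Hn Hi (iap_app n w HI).
      case: Z.ltb_spec => H; first (exfalso; lia). move=> E; exfalso; lia.
    + exists [::]. split => //. split => //. apply: (no_descent_id n); [lia|exact HI|].
      move=> i Hi. case: (Z.lt_total (w (Z.of_nat i)) (w (Z.of_nat i + 1))) => [//|[E|E]].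
      * have [Hinj _] := iap_app n w HI. have := Hinj _ _ E. lia.
      * exfalso. apply: Hnd. exists i. split => //. apply/ltP; lia.
  - case: (classic (exists i, (i < n)%N /\ w (Z.of_nat i + 1) < w (Z.of_nat i))) => [[i [Hi Hd]]|Hnd].
    + have := L_gen n w i Hn Hi (iap_app n w HI).
      case: Z.ltb_spec => H; first lia. rewrite HL => [[HL']].
      have [l [[HF Hl] Hlen]] := IH _ (iap_right n w i Hn Hi HI) HL'.
      exists (List.app l [:: i]). split; last by rewrite app_length /= Hlen; lia.
      split.
      * apply Forall_app. split => //. constructor => //. apply/ltP; lia.
      * move=> z. rewrite gen_prod_app -Hl gen_inv //; lia.
    + exfalso. have Hid : forall z, w z = z.
        apply: (no_descent_id n); [lia|exact HI|].
        move=> i Hi. case: (Z.lt_total (w (Z.of_nat i)) (w (Z.of_nat i + 1))) => [//|[E|E]].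
        * have [Hinj _] := iap_app n w HI. have := Hinj _ _ E. lia.
        * exfalso. apply: Hnd. exists i. split => //. apply/ltP; lia.
      have : L n w = L n (fun z => z) by rewrite /L; apply: Lw_ext.
      rewrite L_id; last lia. lia.
Qed.

Open Scope nat_scope.
Lemma triangle (c : nat -> nat -> nat) m :
  \sum_(1 <= i < m.+1) \sum_(1 <= k < i.+1) c i k = \sum_(1 <= k < m.+1) \sum_(k <= i < m.+1) c i k.
Proof.
  elim: m => [|m IH]; first by rewrite !big_geq.
  rewrite big_nat_recr //= IH.
  rewrite [RHS]big_nat_recr //=.
  rewrite big_nat1.
  rewrite [in RHS](eq_big_nat _ _ (F2 := fun k => \sum_(k <= i < m.+1) c i k + c m.+1 k)); last first.
    move=> k /andP [H1 H2]. rewrite big_nat_recr //=. lia.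
  rewrite big_split /=.
  rewrite [\sum_(1 <= k < m.+2) c m.+1 k]big_nat_recr //=. lia.
Qed.

Lemma comb (c : nat -> nat -> nat) m :
  \sum_(1 <= i < m) (m - i) * \sum_(1 <= k < i.+1) c i k =
  \sum_(1 <= j < m.+1) \sum_(1 <= k < j) \sum_(k <= i < j) c i k.
Proof.
  elim: m => [|m IH]; first by rewrite !big_geq.
  rewrite [RHS]big_nat_recr //= -IH.
  rewrite -triangle.
  case: m IH => [|m] IH; first by rewrite !big_geq.
  rewrite [\sum_(1 <= i < m.+2) ((m.+2 - i) * _)](eq_big_nat _ _
     (F2 := fun i => (m.+1 - i) * \sum_(1 <= k < i.+1) c i k + \sum_(1 <= k < i.+1) c i k)); last first.
    move=> i /andP [H1 H2]. have -> : (m.+2 - i = (m.+1 - i) + 1)%N by lia. by rewrite mulnDl mul1n.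
  rewrite big_split /=. rewrite [\sum_(1 <= i < m.+2) ((m.+1 - i) * _)]big_nat_recr //=.
  rewrite subnn mul0n addn0. done.
Qed.

Open Scope Z_scope.
Lemma mono n w : window_increasing n w -> forall d j, (1 <= j)%N -> (j + d.+1 <= n)%N ->
  w (Z.of_nat j) < w (Z.of_nat (j + d.+1)).
Proof.
  move=> Hw. elim=> [|d IH] j H1 H2.
  - have := Hw j (elimT leP H1) ltac:(lia). by rewrite addn1 Nat2Z.inj_succ Z.add_1_r.
  - have := IH j H1 ltac:(lia). have := Hw (j + d.+1)%N ltac:(lia) ltac:(lia).
    have -> : Z.of_nat (j + d.+2) = Z.of_nat (j + d.+1) + 1 by lia. lia.
Qed.

Lemma mono' n w : window_increasing n w -> forall j k, (1 <= j)%N -> (j < k)%N -> (k <= n)%N ->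
  w (Z.of_nat j) < w (Z.of_nat k).
Proof.
  move=> Hw j k H1 H2 H3. have := mono n w Hw (k - j).-1 j H1 ltac:(lia).
  by have -> : (j + (k - j).-1.+1)%N = k by lia.
Qed.

Lemma res_exists n w x : (0 < n)%N -> is_affine_perm n w ->
  exists k, (1 <= k <= n)%N /\ (w (Z.of_nat k) - x) mod Z.of_nat n = 0.
Proof.
  move=> Hn [Hinj [Hs [Hp _]]]. case: (Hs x) => z Hz.
  pose proof (Z.div_mod (z - 1) (Z.of_nat n) ltac:(lia)) as Hd.
  pose proof (Z.mod_pos_bound (z - 1) (Z.of_nat n) ltac:(lia)) as Hb.
  exists (Z.to_nat (1 + (z - 1) mod Z.of_nat n)). split; first lia.
  have Ez : z = (Z.of_nat (Z.to_nat (1 + (z - 1) mod Z.of_nat n))) + ((z - 1) / Z.of_nat n) * Z.of_nat n by lia.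
  rewrite Ez (per_m n w Hp) in Hz.
  have -> : w (Z.of_nat (Z.to_nat (1 + (z - 1) mod Z.of_nat n))) - x = (- ((z - 1) / Z.of_nat n)) * Z.of_nat n by lia.
  apply Z_mod_mult.
Qed.

Lemma res_unique n w x k k' : (2 <= n)%N -> APp n w -> (1 <= k <= n)%N -> (1 <= k' <= n)%N ->
  (w (Z.of_nat k) - x) mod Z.of_nat n = 0 -> (w (Z.of_nat k') - x) mod Z.of_nat n = 0 -> k = k'.
Proof.
  move=> Hn HAP Hk Hk' E1 E2.
  have := Z.div_mod (w (Z.of_nat k) - x) (Z.of_nat n) ltac:(lia).
  have := Z.div_mod (w (Z.of_nat k') - x) (Z.of_nat n) ltac:(lia).
  rewrite E1 E2 => H1 H2.
  have E : w (Z.of_nat k) = w (Z.of_nat k') + ((w (Z.of_nat k) - x) / Z.of_nat n - (w (Z.of_nat k') - x) / Z.of_nat n) * Z.of_nat n by lia.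
  have := ap_res n w ltac:(lia) HAP _ _ _ E.
  set m := (_ - _)%Z. move=> E3.
  case: (Z.lt_total m 0) => [Hm|[Hm|Hm]]; [nia| |nia]. rewrite Hm in E3. lia.
Qed.

Lemma sum_ind s e (Q : nat -> bool) k0 : (forall k, (s <= k < e)%N -> Q k = (k == k0)) ->
  (\sum_(s <= k < e) Q k = (s <= k0 < e)%N)%N.
Proof.
  elim: e => [|e IH] H.
  - rewrite big_geq //. case: (s <= k0)%N; by [].
  - case: (leqP s e) => Hse.
    + rewrite big_nat_recr //= IH; last by move=> k Hk; apply: H; lia.
      rewrite H; last lia.
      case: (eqVneq e k0) => [<-|Hne] /=.
      * have -> : (s <= e < e)%N = false by lia. have -> : (s <= e < e.+1)%N = true by lia. by [].
      * have -> : (s <= k0 < e.+1)%N = (s <= k0 < e)%N by lia. by rewrite addn0.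
    + rewrite big_geq; last lia. lia.
Qed.

Lemma len_filter_cons (P : Z -> bool) x l :
  length (List.filter P (x :: l)) = (P x + length (List.filter P l))%N.
Proof. rewrite /=. by case: (P x). Qed.

Lemma filter_len_sum (l : list Z) (P : Z -> bool) (Q : nat -> Z -> bool) s e :
  (forall x, In x l -> (P x : nat) = \sum_(s <= k < e) (Q k x : nat)) ->
  length (List.filter P l) = \sum_(s <= k < e) length (List.filter (Q k) l).
Proof.
  elim: l => [|x l IH] H.
  - rewrite big1 //.
  - rewrite len_filter_cons H; last by left.
    rewrite IH; last by move=> y Hy; apply: H; right.
    rewrite -big_split /=. apply: eq_bigr => k _. by rewrite len_filter_cons.
Qed.

Section Gaps.
Variables (n : nat) (w : Z -> Z).
Hypothesis Hn : (2 <= n)%N.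
Hypothesis HI : is_affine_perm n w.
Hypothesis Hw : window_increasing n w.
Let v (k : nat) := w (Z.of_nat k).
Let N := Z.of_nat n.
Let HAP := iap_app n w HI.

Lemma vle j k : (1 <= j)%N -> (j <= k)%N -> (k <= n)%N -> v j <= v k.
Proof.
  move=> H1 H2 H3. case: (eqVneq j k) => [->|Hne]; first lia.
  have := mono' n w Hw j k H1 ltac:(lia) H3. rewrite /v. lia.
Qed.

Lemma bead_char i x k0 : (1 <= i)%N -> (i < n)%N -> v i < x < w (Z.of_nat i + 1) ->
  (1 <= k0 <= n)%N -> (v k0 - x) mod N = 0 -> is_beadb n w x = (i < k0)%N.
Proof.
  move=> Hi1 Hi2 Hx Hk0 Hr.
  have Hi1' : w (Z.of_nat i + 1) = v i.+1 by rewrite /v; f_equal; lia.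
  case H: (i < k0)%N.
  - apply existsb_exists. exists k0. split; first (apply in_seq; lia).
    apply andb_true_iff. split; last by apply Z.eqb_eq.
    apply Z.leb_le. have := vle i.+1 k0 ltac:(lia) ltac:(lia) ltac:(lia). rewrite /v in Hi1' *. lia.
  - case E: (is_beadb n w x) => //. exfalso.
    move: E. rewrite /is_beadb => /existsb_exists [j [Hj /andP [H1 H2]]].
    apply in_seq in Hj. move/Z.leb_le: H1 => H1. move/Z.eqb_eq: H2 => H2.
    have Ejk := res_unique n w x j k0 Hn HAP ltac:(lia) Hk0 H2 Hr. subst j.
    have := vle k0 i ltac:(lia) ltac:(lia) ltac:(lia). rewrite /v in Hx *. lia.
Qed.

Definition cc (i k : nat) : nat := cnt N (w (Z.of_nat k)) (Zbetween (w (Z.of_nat i)) (w (Z.of_nat i + 1))).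

Lemma gap_formula i : (1 <= i)%N -> (i < n)%N -> gap n w i = \sum_(1 <= k < i.+1) cc i k.
Proof.
  move=> Hi1 Hi2. rewrite /gap.
  rewrite (filter_len_sum _ _ (fun k x => (w (Z.of_nat k) - x) mod N =? 0) 1 i.+1).
    by apply: eq_bigr.
  move=> x /In_Zbetween Hx.
  have [k0 [Hk0 Hr]] := res_exists n w x ltac:(lia) HI.
  rewrite (bead_char i x k0) //.
  rewrite (sum_ind 1 i.+1 _ k0).
    case: (ltnP i k0) => H /=; lia.
  move=> k Hk. case: (eqVneq k k0) => [->|Hne]; first by apply/Z.eqb_eq.
  apply/Z.eqb_neq => E. move/eqP: Hne; apply. exact: (res_unique n w x k k0 Hn HAP ltac:(lia) Hk0 E Hr).
Qed.

Lemma cnt_cons a b l : cnt N a (b :: l) = (addn (if (a - b) mod N =? 0 then 1%N else 0%N) (cnt N a l)).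
Proof. rewrite /cnt /=. by case: (_ =? _). Qed.

Lemma cnt_chain k d : (1 <= k)%N -> (k + 1 + d <= n)%N ->
  cnt N (v k) (Zbetween (v k) (v (k + 1 + d))) = \sum_(k <= i < k + 1 + d) cc i k.
Proof.
  move=> Hk. elim: d => [|d IH] Hd.
  - rewrite addn0 addn1 big_nat1 /cc /v. do 3 f_equal. lia.
  - have Hj : (k + 1 + d.+1 = (k + 1 + d).+1)%N by lia.
    rewrite Hj big_nat_recr /=; last lia. rewrite -IH; last lia.
    set j := (k + 1 + d)%N.
    have -> : v j.+1 = w (Z.of_nat j + 1) by rewrite /v; f_equal; lia.
    rewrite (Zbetween_split (v k) (v j)); last first.
      have := mono' n w Hw k j Hk ltac:(lia) ltac:(lia).
      have := mono' n w Hw j j.+1 ltac:(lia) ltac:(lia) ltac:(lia).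
      have -> : Z.of_nat j.+1 = Z.of_nat j + 1 by lia. rewrite /v. lia.
    rewrite cnt_app cnt_cons /cc.
    case: Z.eqb_spec => E.
    + exfalso. have := res_unique n w (v j) k j Hn HAP ltac:(lia) ltac:(lia) E ltac:(rewrite Z.sub_diag; reflexivity).
      lia.
    + rewrite /v. lia.
Qed.

Lemma fl_formula k j : (1 <= k)%N -> (k < j)%N -> (j <= n)%N ->
  Z.to_nat ((v j - v k - 1) / N) = \sum_(k <= i < j) cc i k.
Proof.
  move=> H1 H2 H3.
  have := cnt_chain k (j - k - 1) H1 ltac:(lia).
  have -> : (k + 1 + (j - k - 1) = j)%N by lia.
  move <-. rewrite cnt_Zbetween //; first lia.
  have := mono' n w Hw k j H1 H2 H3. by rewrite /v.
Qed.

Lemma L_formula : L n w = \sum_(1 <= j < n.+1) \sum_(1 <= k < j) Z.to_nat ((v j - v k - 1) / N).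
Proof.
  rewrite /L /Lw big_add1 /=. apply: eq_big_nat => j Hj.
  rewrite big_add1 /=.
  rewrite (big_cat_nat (n := j)) //=; last lia.
  have -> : \sum_(j <= k < n) Nf n w (1 + Z.of_nat j) (1 + Z.of_nat k) = 0%N.
    rewrite big_nat_cond big1 // => k /andP [/andP [H1 H2] _].
    rewrite /Nf /Tf.
    case: (eqVneq j k) => [<-|Hne].
    - rewrite Z.sub_diag Z.sub_diag Z.div_0_l; last lia.
      have -> : (0 - 1) / Z.of_nat n = -1.
        symmetry; apply Z.div_unique with (Z.of_nat n - 1); lia.
      by [].
    - have := mono' n w Hw j.+1 k.+1 ltac:(lia) ltac:(lia) ltac:(lia).
      have -> : Z.of_nat j.+1 = 1 + Z.of_nat j by lia.
      have -> : Z.of_nat k.+1 = 1 + Z.of_nat k by lia. move=> Hlt.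
      have -> : (1 + Z.of_nat j - (1 + Z.of_nat k)) / Z.of_nat n = -1.
        symmetry; apply Z.div_unique with (Z.of_nat n + Z.of_nat j - Z.of_nat k); lia.
      have : (w (1 + Z.of_nat j) - w (1 + Z.of_nat k) - 1) / Z.of_nat n < 0.
        apply Z.div_lt_upper_bound; lia.
      lia.
  rewrite addn0. apply: eq_big_nat => k Hk.
  rewrite /Nf /Tf.
  rewrite (_ : v j.+1 = w (1 + Z.of_nat j)); last by rewrite /v; f_equal; lia.
  rewrite (_ : v k.+1 = w (1 + Z.of_nat k)); last by rewrite /v; f_equal; lia.
  have -> : (1 + Z.of_nat j - (1 + Z.of_nat k)) / Z.of_nat n = 0.
    apply Z.div_small; lia.
  by rewrite Z.sub_0_r.
Qed.

End Gaps.

Lemma fold_sum (f : nat -> nat) s m :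
  fold_right Nat.add 0%N (List.map f (List.seq s m)) = \sum_(s <= i < s + m) f i.
Proof.
  elim: m s => [|m IH] s.
  - by rewrite addn0 big_geq.
  - rewrite /= big_ltn; last lia. rewrite IH. by have -> : (s.+1 + m = s + m.+1)%N by lia.
Qed.

Lemma L_eq_wgs n w : (2 <= n)%N -> is_affine_perm n w -> window_increasing n w ->
  L n w = weighted_gap_sum n w.
Proof.
  move=> Hn HI Hw.
  rewrite /weighted_gap_sum fold_sum.
  have -> : (1 + (n - 1)%coq_nat = n)%N by lia.
  rewrite (eq_big_nat _ _ (F2 := fun i => (n - i) * \sum_(1 <= k < i.+1) cc n w i k)%N); last first.
    move=> i Hi. rewrite (gap_formula n w Hn HI Hw) //; lia.
  rewrite comb (L_formula n w Hn Hw).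
  apply: eq_big_nat => j Hj. apply: eq_big_nat => k Hk.
  rewrite (fl_formula n w Hn HI Hw) //; lia.
Qed.

Theorem mainTheorem1 (n : nat) (w : Z -> Z) :
  (2 <= n)%coq_nat ->
  is_affine_perm n w ->
  window_increasing n w ->
  coxeter_length_is n w (weighted_gap_sum n w).
Proof.
  move=> Hn HI Hw. have Hn' : (2 <= n)%N by apply/leP.
  rewrite -L_eq_wgs //. split.
  - exact: upper.
  - move=> l [HF Hl]. have := lower_bound n l Hn' HF.
    have -> : L n (gen_prod n l) = L n w by rewrite /L; apply: Lw_ext.
    move/leP. done.
Qed.
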